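(* For any optimal packing of a finite multiset of items into a finite sequence of bins, there is an optimal thrifty packing of those items into that sequence that uses the same set of bins.
   Context: Grid Scheduling setting: items have positive integer sizes; bins have positive integer sizes and form a sequence. A packing assigns every item to a bin such that the total size of items in each bin is at most the bin's size. A bin is used if it receives at least one item; the cost of a packing is the sum of the sizes of its used bins. A packing is valid if each empty bin is smaller than every item packed in a later bin. A packing is optimal if it is valid and has minimum cost among all valid packings of the same items into the same sequence. A bin is wasteful if its empty space is at least the size of some item packed in a later bin; a packing is thrifty if it has no wasteful bin. *)

(* Defs.v *)
From mathcomp Require Import all_boot.
Set Implicit Arguments. Unset Strict Implicit. Unset Printing Implicit Defensive.

(* Items: a finite multiset of m items, given as sizes s : 'I_m -> nat
   (item i has size s i).  Bins: a finite sequence of n bins, bin j has size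
   b j, ordered by the index j. *)

Section GridScheduling.
Variables (m n : nat) (s : 'I_m -> nat) (b : 'I_n -> nat).

Definition load (p : 'I_m -> 'I_n) (j : 'I_n) : nat :=
  \sum_(i : 'I_m | p i == j) s i.

Definition used (p : 'I_m -> 'I_n) (j : 'I_n) : bool :=
  [exists i : 'I_m, p i == j].

Definition is_packing (p : 'I_m -> 'I_n) : Prop :=
  forall j : 'I_n, load p j <= b j.

Definition cost (p : 'I_m -> 'I_n) : nat :=
  \sum_(j : 'I_n | used p j) b j.

Definition valid (p : 'I_m -> 'I_n) : Prop :=
  is_packing p /\
  forall (j : 'I_n) (i : 'I_m), ~~ used p j -> (j < p i)%N -> b j < s i.

Definition optimal (p : 'I_m -> 'I_n) : Prop :=
  valid p /\ forall q : 'I_m -> 'I_n, valid q -> cost p <= cost q.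

Definition wasteful (p : 'I_m -> 'I_n) (j : 'I_n) : Prop :=
  exists i : 'I_m, (j < p i)%N /\ s i <= b j - load p j.

Definition thrifty (p : 'I_m -> 'I_n) : Prop :=
  forall j : 'I_n, ~ wasteful p j.

End GridScheduling.

(* Main.v *)
Require Import Defs.
From mathcomp Require Import all_boot.
From mathcomp Require Import zify.
Set Implicit Arguments. Unset Strict Implicit.

Section Helpers.
Variables (m n : nat) (s : 'I_m -> nat) (b : 'I_n -> nat).

Definition mv (q : 'I_m -> 'I_n) (i : 'I_m) (j : 'I_n) : 'I_m -> 'I_n :=
  fun x => if x == i then j else q x.

Lemma load_mv_other q i j k : k != j -> load s (mv q i j) k <= load s q k.
Proof.
move=> kj; rewrite /load (big_mkcond (fun x => mv q i j x == k))
  (big_mkcond (fun x => q x == k)).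
apply: leq_sum => x _; rewrite /mv; case: (x =P i) => [_|_] //.
by rewrite eq_sym (negbTE kj).
Qed.

Lemma load_mv_j q i j : q i != j -> load s (mv q i j) j = s i + load s q j.
Proof.
move=> qij; rewrite /load (bigD1 i) /=; last by rewrite /mv eqxx.
congr (_ + _).
apply: eq_bigl => x; rewrite /mv; case: (x =P i) => [->|_]; first by rewrite eqxx (negbTE qij).
by rewrite andbT.
Qed.

Lemma sum_mv (q : 'I_m -> 'I_n) (i : 'I_m) (j : 'I_n) : j < q i ->
  \sum_(x : 'I_m) nat_of_ord (mv q i j x) < \sum_(x : 'I_m) nat_of_ord (q x).
Proof.
move=> ji; rewrite (bigD1 i) //= [X in _ < X](bigD1 i) //= {1}/mv eqxx.
rewrite (eq_bigr (fun x => nat_of_ord (q x))); first by rewrite ltn_add2r.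
by move=> x xi; rewrite /mv (negbTE xi).
Qed.

End Helpers.

Theorem corollary1 (m n : nat) (s : 'I_m -> nat) (b : 'I_n -> nat)
  (s_pos : forall i, 0 < s i) (b_pos : forall j, 0 < b j)
  (p : 'I_m -> 'I_n) :
  optimal s b p ->
  exists q : 'I_m -> 'I_n,
    [/\ optimal s b q, thrifty s b q & forall j, used q j = used p j].
Proof.
move=> [[pP pV] pO].
pose W q := [/\ is_packing s b q, forall x, nat_of_ord (q x) <= p x
   & forall k, used q k -> used p k].
suff [q [[qP qle qU] qT]] : exists q, W q /\ thrifty s b q.
  have qV : valid s b q.
    split=> // j i uj ji; rewrite ltnNge; apply/negP => sib.
    apply: (qT j); exists i; split=> //.
    suff -> : load s q j = 0 by rewrite subn0.
    rewrite /load big_pred0 // => x; apply/negP => /eqP e.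
    by move/negP: uj; apply; apply/existsP; exists x; rewrite e.
  have cq : cost b q = cost b p.
    apply/eqP; rewrite eqn_leq pO // andbT /cost.
    rewrite (big_mkcond (fun k => used q k)) (big_mkcond (fun k => used p k)).
    by apply: leq_sum => k _; case: (boolP (used q k)) => // /qU ->.
  have Ueq : forall j, used q j = used p j.
    move=> j; case: (boolP (used q j)) => [/qU -> //|nq].
    case: (boolP (used p j)) => // up; exfalso.
    have : cost b q + b j <= cost b p.
      rewrite /cost [X in _ <= X](bigD1 j) //= addnC leq_add2l.
      rewrite (big_mkcond (fun k => used q k))
        (big_mkcond (fun k => used p k && (k != j))).
      apply: leq_sum => k _; case: (boolP (used q k)) => // uk.
      rewrite (qU _ uk) /=; case: eqP => // e; by move: nq; rewrite -e uk.
    by rewrite cq; have := b_pos j; lia.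
  exists q; split=> //; split=> // r rV; rewrite cq; exact: pO.
have WP : W p by split.
suff gen : forall N q0, \sum_(x : 'I_m) nat_of_ord (q0 x) <= N ->
   W q0 -> exists q, W q /\ thrifty s b q.
  exact: (gen _ p (leqnn _) WP).
elim=> [|N IH] q0 Hsum Wq0.
- exists q0; split=> // j [i [ji _]].
  have : \sum_(x : 'I_m) nat_of_ord (q0 x) >= q0 i.
    by rewrite (bigD1 i) //= leq_addr.
  lia.
- case: (boolP [exists j : 'I_n, exists i : 'I_m,
      (j < q0 i) && (s i <= b j - load s q0 j)]) => [/existsP [j /existsP [i /andP [ji sib]]]|nthr]; last first.
    exists q0; split=> // j [i [ji sib]]; move/negP: nthr; apply.
    by apply/existsP; exists j; apply/existsP; exists i; rewrite ji sib.
    case: Wq0 => qP qle qU.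
    have Uj : used p j.
      case: (boolP (used p j)) => // nuj.
      have := pV j i nuj (leq_trans ji (qle i)).
      have : s i <= b j by apply: leq_trans sib (leq_subr _ _).
      lia.
    have qij : q0 i != j by apply/eqP => e; move: ji; rewrite e ltnn.
    apply: (IH (mv q0 i j)).
      have := sum_mv ji; lia.
    split.
    * move=> k; case: (eqVneq k j) => [->|kj].
        rewrite load_mv_j //; have := qP j; lia.
      exact: leq_trans (load_mv_other s q0 i kj) (qP k).
    * move=> x; rewrite /mv; case: (x =P i) => [->|_] //.
      exact: leq_trans (ltnW ji) (qle i).
    * move=> k /existsP [x]; rewrite /mv; case: (x =P i) => [_ /eqP <- //|_ e].
      by apply: qU; apply/existsP; exists x.
Qed.
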